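(* Let $\mathcal{G}$ be a graph of groups over $Y$ and let $w=g_0y_1g_1\cdots y_ng_n$ be a Britton-reduced $\mathcal{G}$-factorization with $n\ge1$. Suppose $$y_{\lfloor n/2+1\rfloor}g_{\lfloor n/2+1\rfloor}\cdots y_ng_n\,g_0\,y_1g_1\cdots y_{\lfloor n/2\rfloor}g_{\lfloor n/2\rfloor}$$ rewrites by finitely many Britton reductions to a Britton-reduced word $\hat w$. Then $\hat w$ is cyclically Britton-reduced and $w$ and $\hat w$ are conjugate in $F(\mathcal{G})$.
   Context: A graph $Y$ (Serre) has vertices $V(Y)$, edges $E(Y)$, maps $\iota,\tau$ and a fixed-point-free involution $y\mapsto\bar y$ with $\iota(\bar y)=\tau(y)$. A graph of groups $\mathcal{G}$ assigns groups $G_a$ ($a\in V(Y)$), $G_y=G_{\bar y}$ ($y\in E(Y)$) and injective homomorphisms $G_y\to G_{\iota(y)}$, $c\mapsto c^y$. With $\Delta=E(Y)\cup\bigcup_a(G_a\setminus\{1\})$, $F(\mathcal{G})$ is $\Delta^*$ modulo $gh=[gh]$ ($g,h\in G_a$, product in $G_a$, $1$ = empty word), $\bar yy=1$ and $y\,c^{\bar y}\bar y=c^y$ ($c\in G_y$). A $\mathcal{G}$-factorization is a word $g_0y_1g_1\cdots y_ng_n$ with $\tau(y_i)=\iota(y_{i+1})$, $\tau(y_n)=\iota(y_1)$, $g_0\in G_{\iota(y_1)}$, $g_i\in G_{\tau(y_i)}$ (trivial $g_i$ omitted). Britton reductions are the rewriting rules $gh\to[gh]$ ($g,h\in G_a\setminus\{1\}$)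 and $y\,c^{\bar y}\,\bar y\to c^y$ ($y\in E(Y)$, $c\in G_y$). A word is Britton-reduced if no rule applies, and cyclically Britton-reduced if every cyclic permutation $u'u$ of it (where the word is $uu'$) is Britton-reduced. *)

(* Defs.v *)
From Stdlib Require Import List Relations ClassicalEpsilon.
Import ListNotations.
Set Implicit Arguments.

Record Grp := {
  gcar :> Type;
  gmul : gcar -> gcar -> gcar;
  gone : gcar;
  ginv : gcar -> gcar;
  gmulA : forall x y z, gmul x (gmul y z) = gmul (gmul x y) z;
  gmul1g : forall x, gmul gone x = x;
  gmulVg : forall x, gmul (ginv x) x = gone
}.

Record GraphOfGroups := {
  V : Type;
  E : Type;
  iota : E -> V;
  tau : E -> V;
  bar : E -> E;
  bar_bar : forall y, bar (bar y) = y;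
  bar_neq : forall y, bar y <> y;
  iota_bar : forall y, iota (bar y) = tau y;
  Gv : V -> Grp;
  Ge : E -> Grp;
  Ge_bar : forall y, Ge (bar y) = Ge y;
  phi : forall y, Ge y -> Gv (iota y);
  phi_mul : forall y c d, phi y (gmul _ c d) = gmul _ (phi y c) (phi y d);
  phi_inj : forall y c d, phi y c = phi y d -> c = d
}.

Section Words.
Variable G : GraphOfGroups.

Unset Implicit Arguments.
Inductive letter : Type :=
| Edge : E G -> letter
| Elt : forall a : V G, forall g : Gv G a, g <> gone (Gv G a) -> letter.

Set Implicit Arguments.
Definition word := list letter.

Definition gword (a : V G) (g : Gv G a) : word :=
  match excluded_middle_informative (g = gone (Gv G a)) with
  | left _ => []
  | right H => [Elt a g H]
  end.

(* c in G_y viewed as an element of G_{bar y} (the same group). *)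
Definition ecast (y : E G) (c : Ge G y) : Ge G (bar G y) :=
  eq_rect _ gcar c _ (eq_sym (Ge_bar G y)).

(* c^{bar y}, an element of G_{iota(bar y)} = G_{tau y} *)
Definition cbar (y : E G) (c : Ge G y) : Gv G (iota G (bar G y)) :=
  phi G (bar G y) (@ecast y c).

Inductive brule : word -> word -> Prop :=
| br_mul : forall a (g h : Gv G a) Hg Hh,
    brule [Elt a g Hg; Elt a h Hh] (gword a (gmul _ g h))
| br_conj : forall y (c : Ge G y),
    brule ([Edge y] ++ gword (iota G (bar G y)) (@cbar y c) ++ [Edge (bar G y)]) (gword (iota G y) (phi G y c)).

Inductive frel : word -> word -> Prop :=
| fr_mul : forall a (g h : Gv G a) Hg Hh,
    frel [Elt a g Hg; Elt a h Hh] (gword a (gmul _ g h))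
| fr_inv : forall y, frel [Edge (bar G y); Edge y] []
| fr_conj : forall y (c : Ge G y),
    frel ([Edge y] ++ gword (iota G (bar G y)) (@cbar y c) ++ [Edge (bar G y)]) (gword (iota G y) (phi G y c)).

Definition ctx (R : word -> word -> Prop) (u v : word) : Prop :=
  exists x z l r, R l r /\ u = x ++ l ++ z /\ v = x ++ r ++ z.

Definition bstep := ctx brule.

(* Equality in F(G): congruence generated by the defining relations. *)
Definition feq := clos_refl_sym_trans word (ctx frel).

Definition britton_reduced (w : word) : Prop := ~ exists w', bstep w w'.

Definition cyc_britton_reduced (w : word) : Prop :=
  forall u u', w = u ++ u' -> britton_reduced (u' ++ u).

(* Conjugacy in F(G): w' = u w u^{-1} with v = u^{-1}. *)
Definition conjugate (w w' : word) : Prop :=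
  exists u v, feq (u ++ v) [] /\ feq (v ++ u) [] /\ feq (u ++ w ++ v) w'.

Definition seg := { y : E G & Gv G (tau G y) }.

Definition segword (s : seg) : word := Edge (projT1 s) :: gword (tau G (projT1 s)) (projT2 s).

Fixpoint chain (ys : list (E G)) : Prop :=
  match ys with
  | y1 :: ((y2 :: _) as t) => tau G y1 = iota G y2 /\ chain t
  | _ => True
  end.

Definition is_factorization (a0 : V G) (segs : list seg) : Prop :=
  match map (@projT1 _ _) segs with
  | [] => False
  | y1 :: _ as ys =>
      chain ys /\ tau G (last ys y1) = iota G y1 /\ a0 = iota G y1
  end.

Definition fword (a0 : V G) (g0 : Gv G a0) (segs : list seg) : word :=
  gword a0 g0 ++ concat (map segword segs).

Definition rotated (a0 : V G) (g0 : Gv G a0) (segs : list seg) : word :=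
  let k := Nat.div (length segs) 2 in
  concat (map segword (skipn k segs)) ++ gword a0 g0 ++
  concat (map segword (firstn k segs)).

End Words.

(* Main.v *)
Require Import Defs.
From Stdlib Require Import List Relations Lia ClassicalEpsilon Arith.
Import ListNotations.

Section S.
Variable G : GraphOfGroups.

Definition isEdge (a : letter G) : nat :=
  match a with Edge _ _ => 1 | _ => 0 end.

Fixpoint edges (w : word G) : nat :=
  match w with [] => 0 | a :: w' => isEdge a + edges w' end.

Lemma edges_app (u v : word G) : edges (u ++ v) = edges u + edges v.
Proof. induction u; simpl; lia. Qed.

Lemma gword_props (a : V G) (g : Gv G a) :
  edges (gword G a g) = 0 /\ length (gword G a g) <= 1.
Proof. unfold gword; destruct excluded_middle_informative; simpl; auto. Qed.

Lemma gword_one (a : V G) : gword G a (gone (Gv G a)) = [].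
Proof. unfold gword; destruct excluded_middle_informative; congruence. Qed.

Lemma brule_props (l r : word G) : brule l r ->
  edges r = 0 /\ length r <= 1 /\ 2 <= length l.
Proof.
  intros H; destruct H.
  - destruct (gword_props a (gmul _ g h)); simpl; auto.
  - destruct (gword_props _ (phi G y c)); repeat split; auto.
    simpl; rewrite length_app; simpl; lia.
Qed.

Lemma brule_split_edges (l r l1 l2 : word G) : brule l r -> l = l1 ++ l2 ->
  l1 <> [] -> l2 <> [] -> edges l1 = edges l2.
Proof.
  intros H E N1 N2; destruct H.
  - assert (edges (l1 ++ l2) = 0) by (rewrite <- E; reflexivity).
    rewrite edges_app in H; lia.
  - destruct (gword_props _ (cbar G y c)) as [Hg _].
    destruct l1 as [|a l1']; [congruence|].
    destruct (exists_last N2) as [l2' [b Hb]]. subst l2.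
    simpl in E. injection E as Ea E'. subst a.
    rewrite app_assoc in E'. apply app_inj_tail in E'. destruct E' as [E1 E2]. subst b.
    assert (edges (l1' ++ l2') = 0) by (rewrite <- E1; exact Hg).
    rewrite edges_app in H. simpl. rewrite edges_app. simpl. lia.
Qed.

Lemma decomp (x l z A B : word G) : x ++ l ++ z = A ++ B ->
  (exists t, A = x ++ l ++ t /\ z = t ++ B) \/
  (exists t, B = t ++ l ++ z /\ x = A ++ t) \/
  (exists l1 l2, l = l1 ++ l2 /\ l1 <> [] /\ l2 <> [] /\ A = x ++ l1 /\ B = l2 ++ z).
Proof.
  intros H. apply app_eq_app in H. destruct H as [t [[H1 H2]|[H1 H2]]].
  - right; left. exists t. subst. split; auto.
  - symmetry in H2. apply app_eq_app in H2. destruct H2 as [t' [[H3 H4]|[H3 H4]]].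
    + left. exists t'. subst. rewrite app_assoc. auto.
    + destruct t as [|a t]; [right;left; exists []; subst; simpl; rewrite ?app_nil_r; auto|].
      destruct t' as [|b t'].
      * left. exists []. subst. rewrite !app_nil_r. auto.
      * right; right. exists (a :: t), (b :: t'). subst. repeat split; congruence.
Qed.

Lemma bstep_in (x l z : word G) r : brule l r -> britton_reduced (x ++ l ++ z) -> False.
Proof. intros H1 H2. apply H2. exists (x ++ r ++ z). exists x, z, l, r. auto. Qed.

Lemma red_infix (x y z : word G) : britton_reduced (x ++ y ++ z) -> britton_reduced y.
Proof.
  intros H [y' [x' [z' [l [r [H1 [H2 H3]]]]]]]. subst.
  apply (bstep_in (x ++ x') l (z' ++ z) r H1). rewrite !app_assoc in *.
  rewrite <- !app_assoc in H. rewrite <- !app_assoc. exact H.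
Qed.

Section Inv.
Variables (P S : word G) (d : nat).
Hypothesis Hred : britton_reduced (P ++ S).
Hypothesis HS : exists e1 t, S = Edge G e1 :: t.
Hypothesis Hd : d <= 1.
Hypothesis HP : forall t t', P = t ++ t' -> edges t' = 0 -> length t' <= 1.

Definition Inv (v : word G) : Prop :=
  exists Lw M Rw t1 t2, v = Lw ++ M ++ Rw /\ S = Lw ++ t1 /\ P = t2 ++ Rw /\
    edges M = 0 /\ length M <= 1 /\ edges Lw = edges Rw + d.

Lemma inv_step v v' : Inv v -> bstep v v' -> Inv v'.
Proof.
  intros [Lw [M [Rw [t1 [t2 [Ev [ES [EP [HM1 [HM2 He]]]]]]]]]] [x [z [l [r [Hr [E1 E2]]]]]].
  subst v. subst v'. destruct (brule_props _ _ Hr) as [Hr1 [Hr2 Hl]].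
  symmetry in E1. apply decomp in E1. destruct E1 as [[t [HA HB]]|[[t [HA HB]]|[l1 [l2 [Hl12 [N1 [N2 [HA HB]]]]]]]].
  - exfalso. rewrite ES, HA in Hred. apply (bstep_in (P ++ x) l (t ++ t1) r Hr). rewrite <- !app_assoc in Hred.
    rewrite <- !app_assoc. exact Hred.
  - symmetry in HA. apply decomp in HA. destruct HA as [[t' [HA' HB']]|[[t' [HA' HB']]|[l1 [l2 [Hl12 [N1 [N2 [HA' HB']]]]]]]].
    + exfalso. subst M. rewrite !length_app in HM2. lia.
    + exfalso. rewrite EP, HA' in Hred. apply (bstep_in (t2 ++ t') l (z ++ S) r Hr).
      rewrite <- !app_assoc in Hred. rewrite <- !app_assoc. exact Hred.
    + destruct t as [|a t]; [|subst M; simpl in HM2; rewrite length_app in HM2; destruct l1; [congruence|simpl in HM2; lia]].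
      simpl in HA'. subst M. rewrite app_nil_r in HB. subst x.
      exists Lw, r, z, t1, (t2 ++ l2).
      repeat split; auto.
      * rewrite EP, HB', app_assoc. reflexivity.
      * rewrite He, HB', edges_app. pose proof (brule_split_edges _ _ _ _ Hr Hl12 N1 N2). lia.
  - destruct M as [|m [|m' M]]; [|simpl in HM2; try lia..].
    + simpl in HB. exists x, r, z, (l1 ++ t1), (t2 ++ l2). repeat split; auto.
      * rewrite ES, HA, <- app_assoc. reflexivity. 
      * rewrite EP, HB, app_assoc. reflexivity.
      * rewrite HA, HB, !edges_app in He. pose proof (brule_split_edges _ _ _ _ Hr Hl12 N1 N2). lia.
    + simpl in HB. destruct l2 as [|b l3]; [congruence|]. simpl in HB. injection HB as Hb HB.
      subst b. exists x, r, z, (l1 ++ t1), (t2 ++ l3). repeat split; auto.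
      * rewrite ES, HA, <- app_assoc. reflexivity. 
      * rewrite EP, HB, app_assoc. reflexivity.
      * rewrite HA, HB, !edges_app in He. pose proof (brule_split_edges _ _ _ _ Hr Hl12 N1 N2).
        simpl in H, HM1. lia.
Qed.

Lemma inv_star v v' : clos_refl_trans (word G) (@bstep G) v v' -> Inv v -> Inv v'.
Proof. induction 1; eauto using inv_step. Qed.


Lemma inv_final what : Inv what -> britton_reduced what ->
  forall p mid s r, what = p ++ mid ++ s -> p <> [] -> s <> [] -> brule (s ++ p) r -> False.
Proof.
  intros [Lw [M [Rw [t1 [t2 [Ev [ES [EP [HM1 [HM2 He]]]]]]]]]] Hw p mid s r Ew Np Ns Hr.
  destruct HS as [e1 [t HS']].
  remember (s ++ p) as l eqn:El. destruct Hr.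
  - destruct s as [|x1 [|x2 s]]; try congruence; simpl in El; injection El; clear El.
    + intros Ep Ex1. subst x1 p.
      destruct Lw as [|b Lw'].
      * simpl in He. assert (Hl := HP t2 Rw EP ltac:(lia)).
        assert (length what <= 2) by (rewrite Ev, !length_app; simpl; lia).
        rewrite Ew in H. rewrite !length_app in H. simpl in H.
        destruct mid; [|simpl in H; lia]. simpl in Ew.
        apply (bstep_in [] [Elt G a h Hh; Elt G a g Hg] [] _ (@br_mul G a h g Hh Hg)).
        simpl. rewrite <- Ew. exact Hw.
      * rewrite ES in HS'. simpl in HS'. injection HS' as Hb _. subst b.
        rewrite Ev in Ew. simpl in Ew. discriminate.
    + intros E3 _ _. destruct p; [congruence|]. destruct s; simpl in E3; discriminate.
  - pose proof (gword_props _ (cbar G y c)) as [Hg1 Hg2].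
    set (gw := gword G (iota G (bar G y)) (cbar G y c)) in *.
    assert (Hl2 : edges (s ++ p) = 2) by (rewrite <- El; simpl; rewrite edges_app, Hg1; simpl; lia).
    assert (Hwe : edges what >= 2) by (rewrite Ew, !edges_app; rewrite edges_app in Hl2; lia).
    rewrite Ev, !edges_app in Hwe.
    destruct Lw as [|b Lw']; [simpl in He, Hwe; lia|].
    pose proof HS' as HS0. rewrite ES in HS0. simpl in HS0. injection HS0 as Hb _. subst b.
    destruct p as [|b p']; [congruence|].
    rewrite Ev in Ew. simpl in Ew. injection Ew as Hb Ew'. subst b.
    assert (p' = []).
    { destruct p' as [|q0 p'']; auto. exfalso.
      destruct (@exists_last _ (q0 :: p'') ltac:(congruence)) as [p3 [q Hq]]. rewrite Hq in El.
      simpl in El. assert (El2 : (Edge G y :: gw) ++ [Edge G (bar G y)] = (s ++ Edge G e1 :: p3) ++ [q]) by (rewrite <- app_assoc; simpl; exact El). clear El. rename El2 into El.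
      apply app_inj_tail in El. destruct El as [El _].
      destruct s as [|s0 s']; [congruence|]. simpl in El. injection El as Es0 El. subst s0.
      assert (edges gw = edges (s' ++ Edge G e1 :: p3)) by (rewrite El; reflexivity).
      rewrite edges_app in H. simpl in H. lia. }
    subst p'.
    assert (Hu : exists u, Rw = u ++ s).
    { assert (Ew2 : ((Edge G e1 :: Lw') ++ M) ++ Rw = ([Edge G e1] ++ mid) ++ s)
        by (rewrite <- !app_assoc; simpl; rewrite Ew'; reflexivity).
      apply app_eq_app in Ew2. destruct Ew2 as [u [[_ Hs]|[_ HR]]]; [|eauto].
      destruct u as [|u0 u']; [exists []; simpl in Hs; auto|].
      exfalso. rewrite Hs in El. simpl in El. injection El as Hu0 El.
      apply app_inj_tail in El. destruct El as [El _].
      assert (edges gw = edges (u' ++ Rw)) by (rewrite El; reflexivity).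
      rewrite edges_app in H. simpl in He, Hwe. lia. }
    destruct Hu as [u Hu].
    rewrite EP, Hu, HS' in Hred.
    apply (bstep_in (t2 ++ u) ([Edge G y] ++ gw ++ [Edge G (bar G y)]) t _ (@br_conj G y c)).
    rewrite El. rewrite <- !app_assoc in Hred. rewrite <- !app_assoc. simpl. exact Hred.
Qed.

Lemma inv_cyc what : Inv what -> britton_reduced what -> cyc_britton_reduced what.
Proof.
  intros HI Hw u u' Eu [v [x [z [l [r [Hr [E1 E2]]]]]]].
  symmetry in E1. apply decomp in E1.
  destruct E1 as [[t [HA HB]]|[[t [HA HB]]|[l1 [l2 [Hl12 [N1 [N2 [HA HB]]]]]]]].
  - rewrite Eu, HA in Hw. apply (bstep_in (u ++ x) l t r Hr). rewrite <- !app_assoc in *. exact Hw.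
  - rewrite Eu, HA in Hw. apply (bstep_in t l (z ++ u') r Hr). rewrite <- !app_assoc in *. exact Hw.
  - apply (inv_final what HI Hw l2 (z ++ x) l1 r); auto.
    + rewrite Eu, HA, HB, <- !app_assoc. reflexivity.
    + rewrite <- Hl12. exact Hr.
Qed.

End Inv.

Lemma grp_mulg1 (X : Grp) (g : X) : gmul X g (ginv X g) = gone X.
Proof.
  rewrite <- (gmul1g X (gmul X g (ginv X g))).
  rewrite <- (gmulVg X (ginv X g)) at 1.
  rewrite <- gmulA, (gmulA X (ginv X g) g), gmulVg, gmul1g. apply gmulVg.
Qed.

Lemma grp_mul1 (X : Grp) (g : X) : gmul X g (gone X) = g.
Proof. rewrite <- (gmulVg X g), gmulA, grp_mulg1, gmul1g. reflexivity. Qed.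

Lemma ginv_neq (X : Grp) (g : X) : g <> gone X -> ginv X g <> gone X.
Proof. intros H E. apply H. rewrite <- (grp_mul1 X g), <- E at 1. apply grp_mulg1. Qed.

Definition inv_letter (a : letter G) : letter G :=
  match a with
  | Edge _ y => Edge G (bar G y)
  | Elt _ b g H => Elt G b (ginv _ g) (ginv_neq _ g H)
  end.

Definition invw (w : word G) : word G := rev (map inv_letter w).

Lemma feq_ctx (u v x z : word G) : feq u v -> feq (x ++ u ++ z) (x ++ v ++ z).
Proof.
  induction 1.
  - apply rst_step. destruct H as [x' [z' [l [r [H1 [H2 H3]]]]]]. subst.
    exists (x ++ x'), (z' ++ z), l, r. split; auto. rewrite <- !app_assoc. auto.
  - apply rst_refl.
  - apply rst_sym; auto.
  - eapply rst_trans; eauto.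
Qed.

Lemma feq_pair1 (a : letter G) : feq [a; inv_letter a] [].
Proof.
  apply rst_step. destruct a as [y|b g H]; simpl.
  - pose proof (fr_inv G (bar G y)) as F. rewrite bar_bar in F.
    eexists [], [], _, _. split; [exact F|]. auto.
  - pose proof (@fr_mul G b g (ginv _ g) H (ginv_neq _ g H)) as F.
    rewrite grp_mulg1, gword_one in F.
    eexists [], [], _, _. split; [exact F|]. auto.
Qed.

Lemma feq_pair2 (a : letter G) : feq [inv_letter a; a] [].
Proof.
  apply rst_step. destruct a as [y|b g H]; simpl.
  - pose proof (fr_inv G y) as F.
    eexists [], [], _, _. split; [exact F|]. auto.
  - pose proof (@fr_mul G b (ginv _ g) g (ginv_neq _ g H) H) as F.
    rewrite gmulVg, gword_one in F.
    eexists [], [], _, _. split; [exact F|]. auto.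
Qed.

Lemma feq_winv (w : word G) : feq (w ++ invw w) [].
Proof.
  induction w as [|a w IH]; [apply rst_refl|].
  unfold invw in *. simpl.
  eapply rst_trans.
  - pose proof (feq_ctx _ _ [a] [inv_letter a] IH) as F. simpl in F.
    rewrite <- app_assoc in F. exact F.
  - apply feq_pair1.
Qed.

Lemma feq_invw (w : word G) : feq (invw w ++ w) [].
Proof.
  induction w as [|a w IH]; [apply rst_refl|].
  unfold invw in *. simpl.
  eapply rst_trans.
  - pose proof (feq_ctx _ _ (rev (map inv_letter w)) w (feq_pair2 a)) as F. simpl in F.
    rewrite <- app_assoc. simpl. exact F.
  - simpl. exact IH.
Qed.

Lemma bstep_feq (u v : word G) : clos_refl_trans _ (@bstep G) u v -> feq u v.
Proof.
  induction 1.
  - apply rst_step. destruct H as [x' [z' [l [r [H1 [H2 H3]]]]]].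
    exists x', z', l, r. split; auto. destruct H1; constructor.
  - apply rst_refl.
  - eapply rst_trans; eauto.
Qed.

Lemma edges_segs (L : list (seg G)) : edges (concat (map (@segword G) L)) = length L.
Proof.
  induction L as [|s L IH]; simpl; auto. rewrite edges_app, IH.
  unfold segword. simpl. rewrite (proj1 (gword_props _ _)). lia.
Qed.

Lemma P_suffix a0 (g0 : Gv G a0) (L : list (seg G)) t t' :
  gword G a0 g0 ++ concat (map (@segword G) L) = t ++ t' -> edges t' = 0 -> length t' <= 1.
Proof.
  destruct L as [|s L] using rev_ind.
  - simpl. rewrite app_nil_r. intros E _. pose proof (gword_props a0 g0) as [_ H].
    rewrite E, length_app in H. lia.
  - rewrite map_app, concat_app. simpl. rewrite app_nil_r, app_assoc.
    intros E He. symmetry in E. apply app_eq_app in E. destruct E as [u [[E1 E2]|[E1 E2]]].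
    + destruct u as [|u0 u'].
      * simpl in E2. subst t'. simpl in He. lia.
      * unfold segword in E2. simpl in E2. injection E2 as _ E2.
        pose proof (gword_props _ (projT2 s)) as [_ H]. rewrite E2, length_app in H. lia.
    + subst t'. rewrite edges_app in He. simpl in He. lia.
Qed.

End S.

Theorem lemma4p2 (G : GraphOfGroups) (a0 : V G) (g0 : Gv G a0)
  (segs : list (seg G)) (what : word G) :
  is_factorization a0 segs ->
  1 <= length segs ->
  britton_reduced (fword a0 g0 segs) ->
  clos_refl_trans (word G) (@bstep G) (rotated a0 g0 segs) what ->
  britton_reduced what ->
  cyc_britton_reduced what /\ conjugate (fword a0 g0 segs) what.
Proof.
  intros _ Hn Hw Hc Hwhat.
  set (k := Nat.div (length segs) 2) in *.
  set (P := gword G a0 g0 ++ concat (map (@segword G) (firstn k segs))).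
  set (S := concat (map (@segword G) (skipn k segs))).
  assert (EW : fword a0 g0 segs = P ++ S).
  { unfold fword, P, S. rewrite <- app_assoc, <- concat_app, <- map_app, firstn_skipn. reflexivity. }
  assert (ER : rotated a0 g0 segs = S ++ P) by reflexivity.
  rewrite EW in *. rewrite ER in Hc.
  pose proof (Nat.div_mod_eq (length segs) 2) as D1.
  pose proof (Nat.mod_upper_bound (length segs) 2 ltac:(lia)) as D2.
  fold k in D1.
  assert (Hd : (length segs - k) - k <= 1) by lia.
  assert (HS : exists e1 t, S = Edge G e1 :: t).
  { unfold S. destruct (skipn k segs) as [|s0 rest] eqn:Es.
    * exfalso. pose proof (length_skipn k segs) as H. rewrite Es in H. simpl in H.
      assert (k < length segs) by (apply Nat.div_lt; lia). lia.
    * simpl. unfold segword. simpl. eauto. }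
  assert (HP : forall t t', P = t ++ t' -> edges G t' = 0 -> length t' <= 1).
  { intros t t' E He. eapply P_suffix; eauto. }
  assert (HI : Inv G P S ((length segs - k) - k) what).
  { apply (inv_star G P S _ Hw Hd _ _ Hc).
    exists S, [], P, [], []. repeat split; try (simpl; auto; fail).
    * rewrite app_nil_r. reflexivity.
    * unfold S, P. rewrite edges_app, !edges_segs, (proj1 (gword_props _ _ _)).
      rewrite length_skipn, length_firstn. lia. }
  split.
  - exact (inv_cyc G P S _ Hw HS Hd HP what HI Hwhat).
  - exists (invw G P), P. split; [apply feq_invw|]. split; [apply feq_winv|].
    eapply rst_trans; [|apply bstep_feq; exact Hc].
    pose proof (feq_ctx G _ _ [] (S ++ P) (feq_invw G P)) as F. simpl in F.
    rewrite <- !app_assoc in F. rewrite <- app_assoc. exact F.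
Qed.
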